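(* Let $I$ be a composition of $n$ with valley set $V$, and let $Cl_V\subseteq Cl_n$ be the subalgebra generated by $(c_v)_{v\in V}$. For $c\in Cl_V$ define $f_c:M_I\to M_I$ by $f_c(x\epsilon_I)=xc\,\epsilon_I$ for all $x\in Cl_n$. Then each $f_c$ is a well-defined endomorphism of $M_I$ as an $HCl_n(0)$-module, $c\mapsto f_c$ defines a right action of $Cl_V$ on $M_I$ (that is, $f_{cc'}=f_{c'}\circ f_c$) commuting with the left $HCl_n(0)$-action, and $c\mapsto f_c$ is a bijective, $\mathbb{Z}/2$-grading-preserving map from $Cl_V$ onto $\operatorname{End}_{HCl_n(0)}(M_I)$. In other words, it is a grading-preserving anti-isomorphism of algebras, which the paper describes as a graded isomorphism.
   Context: For a composition $I=(i_1,\dots,i_r)$ of $n$, $\operatorname{Des}(I)=\{i_1,\dots,i_1+\cdots+i_{r-1}\}\subseteq[1,n-1]$. A valley of $I$ is $k\in\{1,\dots,n\}$ with $k\notin\operatorname{Des}(I)$ and (either $k=1$ or $k-1\in\operatorname{Des}(I)$). $Cl_n$ is the complex Clifford algebra on $c_1,\dots,c_n$ with $c_ic_j=-c_jc_i$ ($i\ne j$) and $c_i^2=-1$. $HCl_n(0)$ is the complex algebra generated by $T_1,\dots,T_{n-1}$ and $c_1,\dots,c_n$ with the Clifford relations, $T_i^2=-T_i$, $T_iT_j=T_jT_i$ ($|i-j|>1$), $T_iT_{i+1}T_i=T_{i+1}T_iT_{i+1}$, $T_ic_j=c_jT_i$ ($j\ne i,i+1$), $T_ic_i=c_{i+1}T_i$,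 and $(T_i+1)c_{i+1}=c_i(T_i+1)$. It is $\mathbb{Z}/2$-graded with $T_i$ even and $c_j$ odd. $H_n(0)$ is the subalgebra generated by the $T_i$. $S_I=\mathbb{C}\epsilon_I$ is the $H_n(0)$-module with $T_j\epsilon_I=-\epsilon_I$ if $j\in\operatorname{Des}(I)$ and $T_j\epsilon_I=0$ otherwise, and $M_I=HCl_n(0)\otimes_{H_n(0)}S_I$. $M_I$ is a free $Cl_n$-module of rank one generated by $\epsilon_I$, with basis $c_D\epsilon_I$ for $D\subseteq\{1,\dots,n\}$ (where $c_D=c_{d_1}\cdots c_{d_k}$ for $D=\{d_1<\dots<d_k\}$), graded by the parity of $|D|$. *)

(* Defs.v *)
From HB Require Import structures.
From mathcomp Require Import all_boot all_order all_algebra.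
From mathcomp Require Import complex.
Set Implicit Arguments. Unset Strict Implicit. Unset Printing Implicit Defensive.
Import Order.TTheory GRing.Theory Num.Theory.
Local Open Scope ring_scope.

Definition is_composition (n : nat) (I : seq nat) : bool :=
  all (fun i => 0 < i)%N I && (sumn I == n).

Definition Des (I : seq nat) : seq nat :=
  [seq sumn (take k I) | k <- iota 1 (size I).-1].

Definition is_valley (n : nat) (I : seq nat) (k : nat) : bool :=
  [&& (1 <= k <= n)%N, k \notin Des I & (k == 1%N) || (k.-1 \in Des I)].

(* The valley set V, with generator c_k indexed by the ordinal k-1 : 'I_n *)
Definition valleys (n : nat) (I : seq nat) : {set 'I_n} :=
  [set i : 'I_n | is_valley n I i.+1].

Section Ops.
Variables (C : nzRingType) (M : lmodType C) (n : nat).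
(* c : nat -> (M -> M) gives the action of c_1, ..., c_n (1-based indices) *)
Variable c : nat -> M -> M.

(* c_D = c_{d_1} ... c_{d_k} for D = {d_1 < ... < d_k}, as an operator on M;
   D is a set of ordinals, the ordinal i standing for the index i+1.
   (enum of a set of ordinals lists it in increasing order.) *)
Definition cD (D : {set 'I_n}) : M -> M :=
  foldr (fun (i : 'I_n) f => c i.+1 \o f) id (enum D).

Definition ClOp (a : {ffun {set 'I_n} -> C}) : M -> M :=
  fun m => \sum_(D : {set 'I_n}) a D *: cD D m.

(* Elements of the image of Cl_n acting on M; with support restriction P on D *)
Definition in_Cl_supp (P : {set 'I_n} -> bool) (x : M -> M) : Prop :=
  exists a : {ffun {set 'I_n} -> C},
    (forall D, ~~ P D -> a D = 0) /\ x =1 ClOp a.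

Definition in_Cl (x : M -> M) : Prop := in_Cl_supp (fun _ => true) x.
Definition in_ClV (V : {set 'I_n}) (x : M -> M) : Prop :=
  in_Cl_supp (fun D => D \subset V) x.
Definition in_ClV_even (V : {set 'I_n}) (x : M -> M) : Prop :=
  in_Cl_supp (fun D => (D \subset V) && ~~ odd #|D|) x.
Definition in_ClV_odd (V : {set 'I_n}) (x : M -> M) : Prop :=
  in_Cl_supp (fun D => (D \subset V) && odd #|D|) x.

Variable eps : M.
(* Z/2-grading of M (basis c_D eps graded by the parity of |D|) *)
Definition M_even (m : M) : Prop :=
  exists x, in_Cl_supp (fun D => ~~ odd #|D|) x /\ m = x eps.
Definition M_odd (m : M) : Prop :=
  exists x, in_Cl_supp (fun D => odd #|D|) x /\ m = x eps.

Definition even_map (f : M -> M) : Prop :=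
  (forall m, M_even m -> M_even (f m)) /\ (forall m, M_odd m -> M_odd (f m)).
Definition odd_map (f : M -> M) : Prop :=
  (forall m, M_even m -> M_odd (f m)) /\ (forall m, M_odd m -> M_even (f m)).

Definition is_fc (x0 : M -> M) (f : M -> M) : Prop :=
  forall x, in_Cl x -> f (x eps) = x (x0 eps).

End Ops.

Section HCl.
Variables (C : nzRingType) (M : lmodType C) (n : nat).
Variables (T c : nat -> M -> M).

Definition HCl_module : Prop :=
  [/\ (forall i, (1 <= i <= n.-1)%N -> linear (T i)),
      (forall j, (1 <= j <= n)%N -> linear (c j)),
      [/\ (forall i j m, (1 <= i <= n)%N -> (1 <= j <= n)%N -> i != j ->
          c i (c j m) = - c j (c i m)) &
      (forall i m, (1 <= i <= n)%N -> c i (c i m) = - m)],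
      [/\ (forall i m, (1 <= i <= n.-1)%N -> T i (T i m) = - T i m),
      (forall i j m, (1 <= i <= n.-1)%N -> (1 <= j <= n.-1)%N ->
          (i.+1 < j)%N || (j.+1 < i)%N -> T i (T j m) = T j (T i m)) &
      (forall i m, (1 <= i)%N -> (i.+1 <= n.-1)%N ->
          T i (T i.+1 (T i m)) = T i.+1 (T i (T i.+1 m)))] &
      [/\ (forall i j m, (1 <= i <= n.-1)%N -> (1 <= j <= n)%N ->
             j != i -> j != i.+1 -> T i (c j m) = c j (T i m)),
          (forall i m, (1 <= i <= n.-1)%N -> T i (c i m) = c i.+1 (T i m)) &
          (forall i m, (1 <= i <= n.-1)%N ->
             T i (c i.+1 m) + c i.+1 m = c i (T i m) + c i m)]].

Definition HCl_endo (f : M -> M) : Prop :=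
  [/\ linear f,
      (forall i m, (1 <= i <= n.-1)%N -> f (T i m) = T i (f m)) &
      (forall j m, (1 <= j <= n)%N -> f (c j m) = c j (f m))].
End HCl.

(* Main.v *)
Require Import Defs.
From HB Require Import structures.
From mathcomp Require Import all_boot all_order all_algebra.
From mathcomp Require Import complex.
From mathcomp Require Import zify ring.
Import Order.TTheory GRing.Theory Num.Theory.
Local Open Scope ring_scope.
Set Implicit Arguments. Unset Strict Implicit. Unset Printing Implicit Defensive.

Definition lo n (k : nat) (D : {set 'I_n}) := [set x in D | (x < k)%N].
Definition hi n (k : nat) (D : {set 'I_n}) := [set x in D | (k <= x)%N].

Lemma enum_filter n (D : {set 'I_n}) : enum D = filter (mem D) (enum 'I_n).
Proof. by rewrite enumT. Qed.

Lemma sorted_ord n : sorted (fun x y : 'I_n => (x < y)%N) (enum 'I_n).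
Proof. by rewrite -(@sorted_map _ _ val ltn) val_enum_ord iota_ltn_sorted. Qed.

Lemma filter_split n (k : nat) (P : pred 'I_n) (s : seq 'I_n) :
  sorted (fun x y : 'I_n => (x < y)%N) s ->
  filter P s = filter (fun x => P x && (x < k)%N) s ++ filter (fun x => P x && (k <= x)%N) s.
Proof.
elim: s => [|x s IH] //= Hs.
have Hall : all (fun y : 'I_n => (x < y)%N) s.
  by apply: (order_path_min _ Hs) => a b d; apply: ltn_trans.
have Hs' : sorted (fun x y : 'I_n => (x < y)%N) s by apply: path_sorted Hs.
case: (ltnP x k) => Hxk.
  rewrite andbT andbF; case: (P x) => /=; rewrite IH //.
rewrite andbF andbT.
have -> : filter (fun x0 : 'I_n => P x0 && (x0 < k)%N) s = [::].
  apply/eqP; rewrite -(filter_pred0 s); apply/eqP; apply: eq_in_filter => y Hy.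
  by have := allP Hall y Hy => Hxy; rewrite ltnNge (leq_trans Hxk (ltnW Hxy)) andbF.
have -> : filter (fun x0 : 'I_n => P x0 && (k <= x0)%N) s = filter P s.
  apply: eq_in_filter => y Hy.
  by have := allP Hall y Hy => Hxy; rewrite (leq_trans Hxk (ltnW Hxy)) andbT.
by case: (P x).
Qed.

Lemma enum_split n k (D : {set 'I_n}) : enum D = enum (lo k D) ++ enum (hi k D).
Proof.
rewrite !enum_filter (filter_split k (mem D) (sorted_ord n)).
by congr (_ ++ _); apply: eq_filter => x; rewrite !inE.
Qed.
Section Lin.
Variables (C : comNzRingType) (M : lmodType C).
Lemma lin_add (f : M -> M) : linear f -> forall u v, f (u + v) = f u + f v.
Proof. by move=> Hf u v; rewrite -[u in LHS]scale1r Hf scale1r. Qed.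
Lemma lin0 (f : M -> M) : linear f -> f 0 = 0.
Proof. by move=> Hf; apply/(addrI (f 0)); rewrite -lin_add // !addr0. Qed.
Lemma lin_scale (f : M -> M) : linear f -> forall k u, f (k *: u) = k *: f u.
Proof. by move=> Hf k u; rewrite -[k *: u]addr0 Hf lin0 // addr0. Qed.
Lemma lin_opp (f : M -> M) : linear f -> forall u, f (- u) = - f u.
Proof. by move=> Hf u; rewrite -scaleN1r lin_scale // scaleN1r. Qed.
Lemma lin_sum (f : M -> M) (I : Type) (r : seq I) (P : pred I) (F : I -> M) :
  linear f -> f (\sum_(i <- r | P i) F i) = \sum_(i <- r | P i) f (F i).
Proof.
move=> Hf; elim/big_rec2: _ => [|i y1 y2 _ <-]; first exact: lin0.
by rewrite lin_add.
Qed.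
End Lin.

Definition toggle n (j : 'I_n) (D : {set 'I_n}) := if j \in D then D :\ j else j |: D.

Section Cliff.
Variables (C : comNzRingType) (M : lmodType C) (n : nat) (c : nat -> M -> M).
Hypothesis Hclin : forall j, (1 <= j <= n)%N -> linear (c j).
Hypothesis Hanti : forall i j m, (1 <= i <= n)%N -> (1 <= j <= n)%N -> i != j ->
          c i (c j m) = - c j (c i m).
Hypothesis Hsq : forall i m, (1 <= i <= n)%N -> c i (c i m) = - m.

Lemma ordB (x : 'I_n) : (1 <= x.+1 <= n)%N.
Proof. by rewrite ltn_ord. Qed.

Definition cL (s : seq 'I_n) : M -> M := foldr (fun (i : 'I_n) f => c i.+1 \o f) id s.

Lemma cDE D : cD c D = cL (enum D). Proof. by []. Qed.

Lemma cL_cat s1 s2 m : cL (s1 ++ s2) m = cL s1 (cL s2 m).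
Proof. by elim: s1 => //= x s IH; rewrite IH. Qed.

Lemma cL_lin s : linear (cL s).
Proof.
elim: s => [|x s IH] //= a u v.
by rewrite /comp IH (Hclin (ordB x)).
Qed.

Lemma cL_nil m : cL [::] m = m. Proof. by []. Qed.
Lemma cL1 x m : cL [:: x] m = c x.+1 m. Proof. by []. Qed.

Lemma lo_lo k (D : {set 'I_n}) : lo k (hi k D) = set0.
Proof. by apply/setP => x; rewrite !inE; case: ltnP; rewrite ?andbF ?andbT. Qed.

Lemma window (j : 'I_n) D m :
  cD c D m = cL (enum (lo j D)) ((if j \in D then c j.+1 else id) (cD c (hi j.+1 D) m)).
Proof.
rewrite cDE (enum_split j D) cL_cat (enum_split j.+1 (hi j D)) cL_cat.
have -> : hi j.+1 (hi j D) = hi j.+1 D.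
  apply/setP => x; rewrite !inE; case: (x \in D) => //=.
  by case: (leqP j.+1 x) => H; rewrite ?andbT ?andbF // (ltnW H).
have -> : lo j.+1 (hi j D) = if j \in D then [set j] else set0.
  apply/setP => x; rewrite !inE ltnS -andbA.
  case: (eqVneq x j) => [->|Hx]; first by rewrite leqnn; case: (j \in D); rewrite !inE ?eqxx.
  have -> : (j <= x <= j)%N = false.
    by apply/negbTE; rewrite -eqn_leq; apply: contra Hx => /eqP H; apply/eqP/val_inj.
  by rewrite andbF; case: (j \in D); rewrite !inE ?(negbTE Hx).
by case: (j \in D); rewrite ?enum_set1 ?enum_set0.
Qed.

Lemma anti_list (j : 'I_n) s m : (forall x, x \in s -> x != j) ->
  c j.+1 (cL s m) = (-1) ^+ size s *: cL s (c j.+1 m).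
Proof.
elim: s m => [|x s IH] m Hs /=; first by rewrite scale1r.
rewrite Hanti ?ordB //; last first.
  by rewrite eqSS; have := Hs x (mem_head _ _); apply: contra => /eqP H; apply/eqP/val_inj.
rewrite IH; last by move=> y Hy; apply: Hs; rewrite inE Hy orbT.
rewrite (lin_scale (Hclin (ordB x))).
by rewrite exprS mulN1r scaleNr.
Qed.

Lemma lo_toggle (j : 'I_n) D : lo j (toggle j D) = lo j D.
Proof.
apply/setP => x; rewrite !inE /toggle.
case: (eqVneq x j) => [->|Hx]; first by rewrite ltnn !andbF.
by case: (j \in D); rewrite ?inE ?(negbTE Hx).
Qed.
Lemma hi_toggle (j : 'I_n) D : hi j.+1 (toggle j D) = hi j.+1 D.
Proof.
apply/setP => x; rewrite !inE /toggle.
case: (eqVneq x j) => [->|Hx]; first by rewrite ltnn !andbF.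
by case: (j \in D); rewrite ?inE ?(negbTE Hx).
Qed.
Lemma mem_toggle (j : 'I_n) D : (j \in toggle j D) = (j \notin D).
Proof. by rewrite /toggle; case: (j \in D); rewrite !inE eqxx. Qed.

Lemma card_toggle (j : 'I_n) D : odd #|toggle j D| = ~~ odd #|D|.
Proof.
rewrite /toggle; case: ifP => Hj.
  by rewrite [#|D|](cardsD1 j) Hj /=; case: odd.
by rewrite cardsU1 Hj.
Qed.

Lemma core (j : 'I_n) D : exists s : C, forall m,
  c j.+1 (cD c D m) = s *: cD c (toggle j D) m.
Proof.
have Hlo : forall x, x \in enum (lo j D) -> x != j.
  move=> x; rewrite mem_enum !inE => /andP [_ Hx]; apply: contraTneq Hx => ->.
  by rewrite ltnn.
case: (boolP (j \in D)) => Hj /=.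
  exists (- (-1) ^+ size (enum (lo j D))) => m.
  rewrite (window j D) (window j (toggle j D)) lo_toggle hi_toggle mem_toggle Hj /=.
  rewrite anti_list //.
  by rewrite Hsq ?ordB // (lin_opp (cL_lin _)) scalerN scaleNr.
exists ((-1) ^+ size (enum (lo j D))) => m.
rewrite (window j D) (window j (toggle j D)) lo_toggle hi_toggle mem_toggle (negbTE Hj) /=.
by rewrite anti_list.
Qed.


Lemma cD_lin (D : {set 'I_n}) : linear (cD c D).
Proof. exact: cL_lin. Qed.

Lemma ClOp_lin (a : {ffun {set 'I_n} -> C}) : linear (ClOp c a).
Proof.
move=> k u v; rewrite /ClOp scaler_sumr -big_split; apply: eq_bigr => D _ /=.
by rewrite cD_lin scalerDr !scalerA mulrC.
Qed.

Lemma ClOp_linA (k : C) (a b : {ffun {set 'I_n} -> C}) m :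
  ClOp c [ffun D => k * a D + b D] m = k *: ClOp c a m + ClOp c b m.
Proof.
rewrite /ClOp scaler_sumr -big_split; apply: eq_bigr => D _ /=.
by rewrite ffunE scalerDl scalerA.
Qed.

Lemma supp_ext (P : {set 'I_n} -> bool) x y : x =1 y -> in_Cl_supp c P x -> in_Cl_supp c P y.
Proof. by move=> Hxy [a [Ha Hx]]; exists a; split => // m; rewrite -Hxy. Qed.

Lemma supp_mono (P Q : {set 'I_n} -> bool) x : (forall D, P D -> Q D) ->
  in_Cl_supp c P x -> in_Cl_supp c Q x.
Proof.
move=> HPQ [a [Ha Hx]]; exists a; split => // D HD; apply: Ha.
by apply: contra HD; apply: HPQ.
Qed.

Lemma supp_lin (P : {set 'I_n} -> bool) x : in_Cl_supp c P x -> linear x.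
Proof. by move=> [a [_ Hx]] k u v; rewrite !Hx ClOp_lin. Qed.

Lemma supp_single (P : {set 'I_n} -> bool) F (k : C) : P F \/ k = 0 ->
  in_Cl_supp c P (fun m => k *: cD c F m).
Proof.
move=> HF; exists [ffun D => if D == F then k else 0]; split.
  move=> D HD; rewrite ffunE; case: (eqVneq D F) => // HDF; subst D.
  by case: HF => // H; rewrite H in HD.
move=> m; rewrite /ClOp (bigD1 F) //= ffunE eqxx big1 ?addr0 // => D /negbTE HD.
by rewrite ffunE HD scale0r.
Qed.

Lemma supp_sum (I : finType) (P : {set 'I_n} -> bool) (F : I -> M -> M) :
  (forall i, in_Cl_supp c P (F i)) -> in_Cl_supp c P (fun m => \sum_i F i m).
Proof.
move=> HF; have [g Hg] := fin_all_exists HF.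
exists [ffun D => \sum_i g i D]; split.
  by move=> D HD; rewrite ffunE big1 // => i _; case: (Hg i) => H _; apply: H.
move=> m; rewrite /ClOp; symmetry.
transitivity (\sum_D \sum_i g i D *: cD c D m).
  by apply: eq_bigr => D _; rewrite ffunE scaler_suml.
rewrite exchange_big /=; apply: eq_bigr => i _.
by case: (Hg i) => _ ->.
Qed.

Lemma supp_comb (P : {set 'I_n} -> bool) (k : C) x y : in_Cl_supp c P x -> in_Cl_supp c P y ->
  in_Cl_supp c P (fun m => k *: x m + y m).
Proof.
move=> [a [Ha Hx]] [b [Hb Hy]]; exists [ffun D => k * a D + b D]; split.
  by move=> D HD; rewrite ffunE Ha // Hb // mulr0 addr0.
by move=> m; rewrite ClOp_linA Hx Hy.
Qed.

Lemma cLcomp s (E : {set 'I_n}) : exists (sg : C) (F : {set 'I_n}),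
  odd #|F| = odd (size s) (+) odd #|E| /\ forall m, cL s (cD c E m) = sg *: cD c F m.
Proof.
elim: s => [|x s [sg [F [HF Hm]]]] /=.
  by exists 1, E; split => // m; rewrite scale1r.
have [s' Hs'] := core x F.
exists (sg * s'), (toggle x F); split.
  by rewrite card_toggle HF; case: odd; case: odd.
by move=> m; rewrite Hm (lin_scale (Hclin (ordB x))) Hs' scalerA.
Qed.

Lemma supp_comp (P Q Rr : {set 'I_n} -> bool) (x y : M -> M) :
  (forall D E F : {set 'I_n}, P D -> Q E -> odd #|F| = odd #|D| (+) odd #|E| -> Rr F) ->
  in_Cl_supp c P x -> in_Cl_supp c Q y -> in_Cl_supp c Rr (x \o y).
Proof.
move=> HR [a [Ha Hx]] [b [Hb Hy]].
apply: (@supp_ext _ (fun m => \sum_D \sum_E (a D * b E) *: cD c D (cD c E m))).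
  move=> m /=; rewrite Hx Hy /ClOp; apply: eq_bigr => D _.
  rewrite (lin_sum _ _ _ (cD_lin D)) scaler_sumr; apply: eq_bigr => E _.
  by rewrite (lin_scale (cD_lin D)) scalerA.
apply: supp_sum => D; apply: supp_sum => E.
have [sg [F [HF Hm]]] := cLcomp (enum D) E.
apply: (@supp_ext _ (fun m => (a D * b E * sg) *: cD c F m)).
  by move=> m; rewrite (cDE D) Hm scalerA.
apply: supp_single.
case: (boolP (P D)) => HD; last by right; rewrite Ha // !mul0r.
case: (boolP (Q E)) => HE; last by right; rewrite Hb // mulr0 mul0r.
by left; apply: (HR D E) => //; rewrite HF -cardE.
Qed.
End Cliff.


Section TT.
Variables (C : comNzRingType) (M : lmodType C) (n : nat) (c T : nat -> M -> M).
Hypothesis Hclin : forall j, (1 <= j <= n)%N -> linear (c j).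
Hypothesis Hanti : forall i j m, (1 <= i <= n)%N -> (1 <= j <= n)%N -> i != j ->
          c i (c j m) = - c j (c i m).
Hypothesis Hsq : forall i m, (1 <= i <= n)%N -> c i (c i m) = - m.
Hypothesis HTlin : forall i, (1 <= i <= n.-1)%N -> linear (T i).
Hypothesis HTc : forall i j m, (1 <= i <= n.-1)%N -> (1 <= j <= n)%N ->
             j != i -> j != i.+1 -> T i (c j m) = c j (T i m).
Hypothesis HTc1 : forall i m, (1 <= i <= n.-1)%N -> T i (c i m) = c i.+1 (T i m).
Hypothesis HTc2 : forall i m, (1 <= i <= n.-1)%N ->
             T i (c i.+1 m) + c i.+1 m = c i (T i m) + c i m.

Lemma cn k : (1 <= k <= n.-1)%N -> (1 <= k <= n)%N.
Proof. move=> /andP[H1 H2]; apply/andP; split; lia. Qed.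
Lemma cn1 k : (1 <= k <= n.-1)%N -> (1 <= k.+1 <= n)%N.
Proof. move=> /andP[H1 H2]; apply/andP; split; lia. Qed.

Lemma avoid i s w : (1 <= i <= n.-1)%N ->
  (forall x : 'I_n, x \in s -> x.+1 != i /\ x.+1 != i.+1) ->
  T i (cL c s w) = cL c s (T i w).
Proof.
move=> Hi; elim: s => [|x s IH] //= Hs.
have [H1 H2] := Hs x (mem_head _ _).
rewrite /comp HTc ?ordB // IH // => y Hy; apply: Hs; by rewrite inE Hy orbT.
Qed.

Lemma cl_c k : (1 <= k <= n)%N -> in_Cl n c (c k).
Proof.
case/andP => Hk1 Hkn.
have Hk : (k.-1 < n)%N by rewrite prednK.
apply: (supp_ext (x := fun m => 1 *: cD c [set Ordinal Hk] m)).
  by move=> m; rewrite scale1r cDE enum_set1 /= prednK.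
by apply: supp_single; left.
Qed.

Lemma cl_id : in_Cl n c id.
Proof.
apply: (supp_ext (x := fun m => 1 *: cD c set0 m)).
  by move=> m; rewrite scale1r cDE enum_set0.
by apply: supp_single; left.
Qed.

Lemma cl_0 : in_Cl n c (fun _ => 0).
Proof.
apply: (supp_ext (x := fun m => 0 *: cD c set0 m)).
  by move=> m; rewrite scale0r.
by apply: supp_single; right.
Qed.

Lemma cl_comp x y : in_Cl n c x -> in_Cl n c y -> in_Cl n c (x \o y).
Proof. by apply: supp_comp. Qed.

Definition Qp i (y : M -> M) := exists y1 y2, in_Cl n c y1 /\ in_Cl n c y2 /\
  forall m, T i (y m) = y1 (T i m) + y2 m.

Lemma Qp_ext i y y' : y =1 y' -> Qp i y -> Qp i y'.
Proof. move=> E [y1 [y2 [H1 [H2 H]]]]; exists y1, y2; split; first exact: H1. by split => // m; rewrite -E. Qed.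

Lemma Qp_comb i k y z : (1 <= i <= n.-1)%N -> Qp i y -> Qp i z ->
  Qp i (fun m => k *: y m + z m).
Proof.
move=> Hi [y1 [y2 [H1 [H2 H]]]] [z1 [z2 [K1 [K2 K]]]].
exists (fun m => k *: y1 m + z1 m), (fun m => k *: y2 m + z2 m); split.
  exact: supp_comb.
split; first exact: supp_comb.
move=> m; rewrite (HTlin Hi) H K.
by rewrite scalerDr !addrA; congr (_ + _); rewrite -!addrA; congr (_ + _); rewrite addrC.
Qed.

Lemma Qp_comp i y z : (1 <= i <= n.-1)%N -> in_Cl n c z -> Qp i y -> Qp i z -> Qp i (y \o z).
Proof.
move=> Hi Hz [y1 [y2 [H1 [H2 H]]]] [z1 [z2 [K1 [K2 K]]]].
exists (y1 \o z1), (fun m => 1 *: y1 (z2 m) + y2 (z m)); split.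
  exact: cl_comp.
split; first by apply: supp_comb; [apply: cl_comp K2|apply: cl_comp Hz].
move=> m /=; rewrite H K (lin_add (supp_lin Hclin H1)) scale1r addrA //.
Qed.

Lemma Qp0 i : (1 <= i <= n.-1)%N -> Qp i (fun _ => 0).
Proof.
move=> Hi; exists (fun _ => 0), (fun _ => 0); split; first exact: cl_0.
by split; [exact: cl_0| move=> m; rewrite (lin0 (HTlin Hi)) addr0].
Qed.

Lemma Qp_id i : (1 <= i <= n.-1)%N -> Qp i id.
Proof.
move=> Hi; exists id, (fun _ => 0); split; first exact: cl_id.
by split; [exact: cl_0| move=> m; rewrite addr0].
Qed.

Lemma Qp_c i k : (1 <= i <= n.-1)%N -> (1 <= k <= n)%N -> Qp i (c k).
Proof.
move=> Hi Hk.
case: (eqVneq k i) => [->|H1].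
  exists (c i.+1), (fun _ => 0); split; first exact: cl_c (cn1 Hi).
  by split; [exact: cl_0| move=> m; rewrite addr0 HTc1].
case: (eqVneq k i.+1) => [->|H2].
  exists (c i), (fun m => (-1) *: c i.+1 m + c i m); split; first exact: cl_c (cn Hi).
  split; first by apply: supp_comb; apply: cl_c; [exact: cn1 Hi|exact: cn Hi].
  move=> m; apply: (addIr (c i.+1 m)); rewrite HTc2 //.
  by rewrite scaleN1r [- _ + _]addrC !addrA subrK.
exists (c k), (fun _ => 0); split; first exact: cl_c.
by split; [exact: cl_0| move=> m; rewrite addr0 HTc].
Qed.

Lemma cl_cL (s : seq 'I_n) : in_Cl n c (cL c s).
Proof.
have [sg [F [_ HF]]] := cLcomp Hclin Hanti Hsq s set0.
apply: (supp_ext (x := fun m => sg *: cD c F m)).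
  by move=> m; rewrite -HF cDE enum_set0.
by apply: supp_single; left.
Qed.

Lemma Qp_cL i (s : seq 'I_n) : (1 <= i <= n.-1)%N -> Qp i (cL c s).
Proof.
move=> Hi; elim: s => [|x s IH] /=; first exact: Qp_id.
apply: Qp_comp => //; first exact: cl_cL.
exact: Qp_c (ordB x).
Qed.

Lemma Qp_Cl i y : (1 <= i <= n.-1)%N -> in_Cl n c y -> Qp i y.
Proof.
move=> Hi [a [_ Ha]]; apply: (Qp_ext (y := ClOp c a)) => [m|]; first by rewrite Ha.
rewrite /ClOp; elim: (index_enum _) => [|D r IH].
  by apply: (Qp_ext (y := fun _ => 0)) => [m|]; [rewrite big_nil|exact: Qp0].
apply: (Qp_ext (y := fun m => a D *: cD c D m + \sum_(j <- r) a j *: cD c j m)).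
  by move=> m; rewrite big_cons.
apply: Qp_comb => //; exact: Qp_cL.
Qed.

Lemma Tc2' i v : (1 <= i <= n.-1)%N -> T i (c i.+1 v) = c i (T i v) + c i v - c i.+1 v.
Proof. by move=> Hi; apply: (addIr (c i.+1 v)); rewrite HTc2 // subrK. Qed.

Lemma Vlist i (lam : C) (s : seq 'I_n) w : (1 <= i <= n.-1)%N ->
  (forall x : 'I_n, x \in s -> (x.+1 = i -> lam = 0) /\ (x.+1 = i.+1 -> lam = -1)) ->
  T i w = lam *: w -> T i (cL c s w) = lam *: cL c s w.
Proof.
move=> Hi; elim: s => [|x s IH] //= Hs Hw.
have [H1 H2] := Hs x (mem_head _ _).
have {}IH : T i (cL c s w) = lam *: cL c s w.
  by apply: IH => // y Hy; apply: Hs; rewrite inE Hy orbT.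
rewrite /comp; set u := cL c s w.
case: (eqVneq x.+1 i) => [Ex|Nx].
  by rewrite Ex HTc1 // IH (H1 Ex) !scale0r (lin0 (Hclin (cn1 Hi))).
case: (eqVneq x.+1 i.+1) => [Ex|Nx'].
  rewrite Ex Tc2' // IH (H2 Ex) scaleN1r (lin_opp (Hclin (cn Hi))).
  by rewrite -/u addNr add0r scaleN1r.
by rewrite HTc ?ordB // IH (lin_scale (Hclin (ordB x))).
Qed.

Section KF.
Variables (a a' : 'I_n) (eps : M) (lam : C).
Hypothesis Ha' : val a' = (val a).+1.
Hypothesis HTe : T a.+1 eps = lam *: eps.

Lemma Hia : (1 <= a.+1 <= n.-1)%N.
Proof. have := ltn_ord a'; rewrite Ha' => H; apply/andP; split => //. by rewrite -ltnS (ltn_predK H). Qed.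

Lemma wind2 (X : {set 'I_n}) m : cD c X m = cL c (enum (lo a X))
  ((if a \in X then c a.+1 else id) ((if a' \in X then c a.+2 else id) (cD c (hi a.+2 X) m))).
Proof.
rewrite (window c a X); congr (cL c _ _); congr ((if _ then _ else _) _).
rewrite (window c a' (hi a.+1 X)).
have -> : lo a' (hi a.+1 X) = set0 by rewrite /lo Ha'; exact: lo_lo.
have -> : a' \in hi a.+1 X = (a' \in X) by rewrite inE Ha' leqnn andbT.
have -> : hi a'.+1 (hi a.+1 X) = hi a.+2 X.
  apply/setP => x; rewrite !inE Ha'; case: (x \in X) => //=.
  by case: (leqP a.+2 x) => H; rewrite ?andbT ?andbF // (ltnW H).
by rewrite enum_set0 Ha'.
Qed.

Lemma lohi_eq (X D : {set 'I_n}) :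
  (forall x, x != a -> x != a' -> (x \in X) = (x \in D)) ->
  lo a X = lo a D /\ hi a.+2 X = hi a.+2 D.
Proof.
move=> H; split; apply/setP => x; rewrite !inE.
  case: (eqVneq x a) => [->|Na]; first by rewrite ltnn !andbF.
  case: (eqVneq x a') => [->|Na']; first by rewrite Ha' ltnNge leqnSn !andbF.
  by rewrite H.
case: (eqVneq x a) => [->|Na]; first by rewrite ltnNge leqnSn !andbF.
case: (eqVneq x a') => [->|Na']; first by rewrite Ha' ltnNge leqnn !andbF.
by rewrite H.
Qed.

Definition kk1 (D : {set 'I_n}) : C := match a \in D, a' \in D with
  | true, true => -(lam+1) | true, false => lam | false, true => lam+1 | false, false => lam end.
Definition EE1 (D : {set 'I_n}) := match a \in D, a' \in D with
  | true, true => D | true, false => a' |: (D :\ a) | false, true => a |: (D :\ a') | false, false => D end.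
Definition kk2 (D : {set 'I_n}) : C := match a \in D, a' \in D with
  | true, true => 1 | false, true => -1 | _, _ => 0 end.
Definition EE2 (D : {set 'I_n}) := match a \in D, a' \in D with
  | true, true => D :\ a :\ a' | _, _ => D end.

Lemma naa' : a != a'.
Proof. by apply/eqP => H; apply: (@n_Sn (val a)); rewrite -Ha' H. Qed.

Lemma KF D : T a.+1 (cD c D eps) = kk1 D *: cD c (EE1 D) eps + kk2 D *: cD c (EE2 D) eps.
Proof.
set L := cL c (enum (lo a D)).
set u := cD c (hi a.+2 D) eps.
have Hi := Hia.
have HL : forall v, T a.+1 (L v) = L (T a.+1 v).
  move=> v; apply: avoid => // x; rewrite mem_enum !inE => /andP [_ Hx].
  by split; apply/eqP => E; move: (nat_of_ord x) (nat_of_ord a) Hx E => p q; lia.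
have Hu : T a.+1 u = lam *: u.
  rewrite /u cDE avoid // ?HTe ?(lin_scale (cL_lin Hclin _)) // => x.
  rewrite mem_enum !inE => /andP [_ Hx].
  by split; apply/eqP => E; move: (nat_of_ord x) (nat_of_ord a) Hx E => p q; lia.
have Ll : linear L := cL_lin Hclin _.
have Hc1 := Hclin (cn1 Hi); have Hc0 := Hclin (cn Hi).
have naa := naa'.
have WD := wind2 D eps; rewrite -/L -/u in WD.
have naa2 : a' != a by rewrite eq_sym.
have Na21 : a.+2 != a.+1 by rewrite eqSS; apply/eqP => E; move: (nat_of_ord a) E => p; lia.
rewrite /kk1 /EE1 /kk2 /EE2.
case: (boolP (a \in D)) => HaD; case: (boolP (a' \in D)) => Ha'D;
  rewrite ?HaD ?Ha'D ?(negbTE HaD) ?(negbTE Ha'D) /= in WD *; rewrite WD.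
- rewrite [cD c (D :\ a :\ a') eps]wind2.
  have [-> ->] : lo a (D :\ a :\ a') = lo a D /\ hi a.+2 (D :\ a :\ a') = hi a.+2 D.
    by apply: lohi_eq => x Nx Nx'; rewrite !inE Nx Nx'.
  rewrite -/L -/u !inE eqxx naa naa2 /=.
  rewrite HL HTc1 // Tc2' // Hu (lin_scale Hc0) (lin_add Hc1) (lin_opp Hc1) (lin_add Hc1).
  rewrite (lin_scale Hc1) Hsq ?(cn1 Hi) // Hanti ?(cn1 Hi) ?(cn Hi) //.
  rewrite eqxx /= (lin_add Ll) (lin_opp Ll) (lin_add Ll) (lin_scale Ll) !(lin_opp Ll).
  by rewrite opprK scalerN scaleNr scalerDl scale1r scale1r opprD.
- rewrite [cD c (a' |: D :\ a) eps]wind2.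
  have [-> ->] : lo a (a' |: D :\ a) = lo a D /\ hi a.+2 (a' |: D :\ a) = hi a.+2 D.
    by apply: lohi_eq => x Nx Nx'; rewrite !inE ?Nx ?Nx' ?(negbTE Nx) ?(negbTE Nx').
  rewrite -/L -/u !inE ?eqxx ?(negbTE naa) ?(negbTE naa2) ?naa ?naa2 /= ?scale0r ?addr0 ?orbT.
  by rewrite HL HTc1 // Hu (lin_scale Hc1) (lin_scale Ll).
- rewrite [cD c (a |: D :\ a') eps]wind2.
  have [-> ->] : lo a (a |: D :\ a') = lo a D /\ hi a.+2 (a |: D :\ a') = hi a.+2 D.
    by apply: lohi_eq => x Nx Nx'; rewrite !inE ?Nx ?Nx' ?(negbTE Nx) ?(negbTE Nx').
  rewrite -/L -/u !inE ?eqxx ?(negbTE naa) ?(negbTE naa2) ?naa ?naa2 /= ?orbT ?andbF /= scaleN1r.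
  rewrite HL Tc2' // Hu (lin_scale Hc0) (lin_add Ll) (lin_opp Ll) (lin_add Ll) (lin_scale Ll).
  by rewrite scalerDl scale1r.
- by rewrite scale0r addr0 HL Hu (lin_scale Ll).
Qed.

Definition out (X : {set 'I_n}) := X :\ a :\ a'.

Definition eqout (X Y : {set 'I_n}) := out X == out Y.
Lemma eqsetE (X Y : {set 'I_n}) :
  (X == Y) = [&& (a \in X) == (a \in Y), (a' \in X) == (a' \in Y) & eqout X Y].
Proof.
rewrite /eqout.
apply/eqP/and3P => [->|[/eqP H1 /eqP H2 /eqP H3]]; first by rewrite !eqxx.
apply/setP => x; case: (eqVneq x a) => [->//|Na]; case: (eqVneq x a') => [->//|Na'].
by have := congr1 (fun S : {set 'I_n} => x \in S) H3; rewrite /out /= !inE Na Na'.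
Qed.

Lemma out_aU (X : {set 'I_n}) : out (a |: X) = out X.
Proof. by apply/setP => x; rewrite !inE; case: (eqVneq x a) => //=; rewrite andbF. Qed.
Lemma out_a'U (X : {set 'I_n}) : out (a' |: X) = out X.
Proof. by apply/setP => x; rewrite !inE; case: (eqVneq x a') => //=; rewrite !andbF. Qed.
Lemma out_Da (X : {set 'I_n}) : out (X :\ a) = out X.
Proof. by apply/setP => x; rewrite !inE; case: (eqVneq x a) => //=; rewrite !andbF. Qed.
Lemma out_Da' (X : {set 'I_n}) : out (X :\ a') = out X.
Proof. by apply/setP => x; rewrite !inE; case: (eqVneq x a') => //=; rewrite !andbF. Qed.

Definition coef (D E : {set 'I_n}) : C :=
  kk1 D * (E == EE1 D)%:R + kk2 D * (E == EE2 D)%:R.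

Lemma delta_sum (F : {set 'I_n} -> M) (E1 : {set 'I_n}) (k : C) :
  \sum_E (k * (E == E1)%:R) *: F E = k *: F E1.
Proof.
rewrite (bigD1 E1) //= eqxx mulr1 big1 ?addr0 // => E /negbTE ->.
by rewrite mulr0 scale0r.
Qed.

Lemma sum2 (b : {ffun {set 'I_n} -> C}) D1 D2 k1 k2 :
  \sum_D b D * ((D == D1)%:R * k1 + (D == D2)%:R * k2) = b D1 * k1 + b D2 * k2.
Proof.
rewrite (eq_bigr (fun D => b D * ((D == D1)%:R * k1) + b D * ((D == D2)%:R * k2))); last first.
  by move=> D _; rewrite mulrDr.
rewrite big_split /=; congr (_ + _).
  rewrite (bigD1 D1) //= eqxx mul1r big1 ?addr0 // => D /negbTE ->.
  by rewrite mul0r mulr0.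
rewrite (bigD1 D2) //= eqxx mul1r big1 ?addr0 // => D /negbTE ->.
by rewrite mul0r mulr0.
Qed.

Hypothesis Hinj : injective (fun b : {ffun {set 'I_n} -> C} => ClOp c b eps).

Lemma coef_eq (b : {ffun {set 'I_n} -> C}) :
  T a.+1 (ClOp c b eps) = lam *: ClOp c b eps ->
  forall E, \sum_D b D * coef D E = lam * b E.
Proof.
move=> H E0.
suff : [ffun E => \sum_D b D * coef D E] = [ffun E => lam * b E].
  by move=> HH; have := congr1 (fun f : {ffun {set 'I_n} -> C} => f E0) HH; rewrite !ffunE.
apply: Hinj => /=.
transitivity (T a.+1 (ClOp c b eps)); last first.
  rewrite H /ClOp scaler_sumr; apply: eq_bigr => D _.
  by rewrite ffunE scalerA.
rewrite /ClOp (lin_sum _ _ _ (HTlin Hia)).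
transitivity (\sum_E \sum_D (b D * coef D E) *: cD c E eps).
  by apply: eq_bigr => E _; rewrite ffunE scaler_suml.
rewrite exchange_big /=; apply: eq_bigr => D _.
rewrite (lin_scale (HTlin Hia)) KF scalerDr !scalerA.
rewrite /coef.
transitivity (\sum_E ((b D * kk1 D) * (E == EE1 D)%:R) *: cD c E eps +
   \sum_E ((b D * kk2 D) * (E == EE2 D)%:R) *: cD c E eps).
  by rewrite -big_split; apply: eq_bigr => E _; rewrite mulrDr !mulrA scalerDl.
by rewrite !delta_sum.
Qed.


Ltac simp_out := rewrite ?out_aU ?out_a'U ?out_Da' ?out_Da ?out_aU ?out_a'U ?out_Da' ?out_Da.

Lemma finish (b : {ffun {set 'I_n} -> C}) (E Ds : {set 'I_n}) k1 k2 :
  T a.+1 (ClOp c b eps) = lam *: ClOp c b eps ->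
  (forall D, coef D E = (D == Ds)%:R * k1 + (D == E)%:R * k2) ->
  b Ds * k1 + b E * k2 = lam * b E.
Proof.
move=> H HC; have E1 := coef_eq H E.
rewrite (eq_bigr (fun D => b D * ((D == Ds)%:R * k1 + (D == E)%:R * k2))) in E1; last first.
  by move=> D _; rewrite HC.
by rewrite sum2 in E1.
Qed.

Lemma kill0 (b : {ffun {set 'I_n} -> C}) : lam = 0 ->
  T a.+1 (ClOp c b eps) = lam *: ClOp c b eps -> forall Ds : {set 'I_n}, a' \in Ds -> b Ds = 0.
Proof.
move=> Hl H Ds Hs'.
have naa := naa'.
have naa2 : a' != a by rewrite eq_sym.
case: (boolP (a \in Ds)) => Hs.
- have HC : forall D, coef D (Ds :\ a :\ a') = (D == Ds)%:R * 1 + (D == (Ds :\ a :\ a'))%:R * 0.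
    move=> D; rewrite /coef /kk1 /EE1 /kk2 /EE2 Hl.
    case: (boolP (a \in D)) => HaD; case: (boolP (a' \in D)) => Ha'D;
    rewrite !eqsetE /eqout; simp_out; rewrite !inE ?eqxx ?HaD ?Ha'D ?Hs ?Hs' ?(negbTE HaD) ?(negbTE Ha'D)
      ?(negbTE naa) ?(negbTE naa2) /=;
    rewrite ?[out Ds == out D]eq_sym; case: (out D == out Ds) => /=; ring.
  by have := finish H HC; rewrite Hl mulr1 !mulr0 mul0r addr0.
- have HC : forall D, coef D (a |: Ds :\ a') = (D == Ds)%:R * 1 + (D == (a |: Ds :\ a'))%:R * 0.
    move=> D; rewrite /coef /kk1 /EE1 /kk2 /EE2 Hl.
    case: (boolP (a \in D)) => HaD; case: (boolP (a' \in D)) => Ha'D;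
    rewrite !eqsetE /eqout; simp_out; rewrite !inE ?eqxx ?HaD ?Ha'D ?Hs ?Hs' ?(negbTE HaD) ?(negbTE Ha'D)
      ?(negbTE naa) ?(negbTE naa2) ?(negbTE Hs) /=;
    rewrite ?[out Ds == out D]eq_sym; case: (out D == out Ds) => /=; ring.
  by have := finish H HC; rewrite Hl mulr1 !mulr0 mul0r addr0.
Qed.

Lemma killm1 (b : {ffun {set 'I_n} -> C}) : lam = -1 ->
  T a.+1 (ClOp c b eps) = lam *: ClOp c b eps -> forall Ds : {set 'I_n}, a \in Ds -> b Ds = 0.
Proof.
move=> Hl H Ds Hs.
have naa := naa'.
have naa2 : a' != a by rewrite eq_sym.
case: (boolP (a' \in Ds)) => Hs'.
- have HC : forall D, coef D (Ds :\ a :\ a') = (D == Ds)%:R * 1 + (D == (Ds :\ a :\ a'))%:R * (-1).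
    move=> D; rewrite /coef /kk1 /EE1 /kk2 /EE2 Hl.
    case: (boolP (a \in D)) => HaD; case: (boolP (a' \in D)) => Ha'D;
    rewrite !eqsetE /eqout; simp_out; rewrite !inE ?eqxx ?HaD ?Ha'D ?Hs ?Hs' ?(negbTE HaD) ?(negbTE Ha'D)
      ?(negbTE naa) ?(negbTE naa2) /=;
    rewrite ?[out Ds == out D]eq_sym; case: (out D == out Ds) => /=; ring.
  have := finish H HC; rewrite Hl mulr1 mulrN1 mulN1r => /eqP.
  by rewrite subr_eq addrC subrr => /eqP.
- have HC : forall D, coef D (a' |: Ds :\ a) = (D == Ds)%:R * (-1) + (D == (a' |: Ds :\ a))%:R * (-1).
    move=> D; rewrite /coef /kk1 /EE1 /kk2 /EE2 Hl.
    case: (boolP (a \in D)) => HaD; case: (boolP (a' \in D)) => Ha'D;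
    rewrite !eqsetE /eqout; simp_out; rewrite !inE ?eqxx ?HaD ?Ha'D ?Hs ?Hs' ?(negbTE HaD) ?(negbTE Ha'D)
      ?(negbTE naa) ?(negbTE naa2) ?(negbTE Hs') /=;
    rewrite ?[out Ds == out D]eq_sym; case: (out D == out Ds) => /=; ring.
  have := finish H HC; rewrite Hl !mulrN1 mulN1r => /eqP.
  by rewrite subr_eq addrC subrr oppr_eq0 => /eqP.
Qed.

End KF.
End TT.

Unset Implicit Arguments.

Lemma Des_lt n I k : is_composition n I -> k \in Des I -> (k < n)%N.
Proof.
case/andP => Hpos /eqP <- /mapP [j]; rewrite mem_iota => /andP [Hj1 Hj2] ->.
have Hj : (j < size I)%N by move: Hj1 Hj2; case: (size I) => [|m] /=; lia.
rewrite -{2}(cat_take_drop j I) sumn_cat -{1}[sumn (take j I)]addn0 ltn_add2l.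
rewrite (drop_nth 0 Hj) /=.
have := allP Hpos (nth 0 I j) (mem_nth 0 Hj); rewrite /= => H; lia.
Qed.

Theorem mainTheorem10 (R : rcfType) (n : nat) (I : seq nat)
  (M : lmodType R[i]) (T c : nat -> M -> M) (eps : M) :
  is_composition n I ->
  HCl_module n T c ->
  (forall j, (1 <= j <= n.-1)%N ->
     T j eps = (if j \in Des I then - eps else 0)) ->
  injective (fun a : {ffun {set 'I_n} -> R[i]} => ClOp c a eps) ->
  (forall m : M, exists a : {ffun {set 'I_n} -> R[i]}, m = ClOp c a eps) ->
  let V := valleys n I in
  [/\ (forall x, in_ClV c V x ->
         exists f, is_fc n c eps x f /\ HCl_endo n T c f),
      (forall (k : R[i]) x y f g, in_ClV c V x -> in_ClV c V y ->
         is_fc n c eps x f -> is_fc n c eps y g ->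
         is_fc n c eps (fun m => k *: x m + y m) (fun m => k *: f m + g m)),
      (forall x y f g, in_ClV c V x -> in_ClV c V y ->
         is_fc n c eps x f -> is_fc n c eps y g ->
         is_fc n c eps (x \o y) (g \o f)),
      (forall x f, in_ClV_even c V x -> is_fc n c eps x f -> even_map n c eps f)
        /\ (forall x f, in_ClV_odd c V x -> is_fc n c eps x f -> odd_map n c eps f) &
      [/\ (forall x y f, in_ClV c V x -> in_ClV c V y ->
             is_fc n c eps x f -> is_fc n c eps y f -> x =1 y) &
          (forall g, HCl_endo n T c g ->
             exists x, in_ClV c V x /\ is_fc n c eps x g)]].
Proof.
move=> Hcomp [HTlin Hclin [Hanti Hsq] _ [HTc HTc1 HTc2]] HTe Hinj Hsurj V.
pose lam (k : nat) : R[i] := if k \in Des I then -1 else 0.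
have HTe' : forall i, (1 <= i <= n.-1)%N -> T i eps = lam i *: eps.
  by move=> i Hi; rewrite HTe // /lam; case: ifP => _; rewrite ?scaleN1r ?scale0r.
have Hex : forall m : M, exists a : {ffun {set 'I_n} -> R[i]}, m == ClOp c a eps.
  by move=> m; have [a Ha] := Hsurj m; exists a; apply/eqP.
pose cf (m : M) := xchoose (Hex m).
have Hcf : forall m, m = ClOp c (cf m) eps by move=> m; apply/eqP; exact: (xchooseP (Hex m)).
have ClV_Cl : forall x, in_ClV c V x -> in_Cl n c x by move=> x; apply: supp_mono.
have Cl_ClOp : forall a : {ffun {set 'I_n} -> R[i]}, in_Cl n c (ClOp c a) by move=> a; exists a.
have Hfc_ev : forall x f, is_fc n c eps x f -> f eps = x eps.
  by move=> x f Hf; exact: (Hf id (cl_id n c)).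
split.
-
  move=> x Hx; have [ax [Hax Hxa]] := Hx.
  pose f m := ClOp c (cf m) (x eps).
  have Hf : forall y, in_Cl n c y -> f (y eps) = y (x eps).
    move=> y [b [_ Hy]]; rewrite /f.
    have -> : cf (y eps) = b by apply: Hinj => /=; rewrite -Hcf Hy.
    by rewrite Hy.
  have Tx : forall j, (1 <= j <= n.-1)%N -> T j (x eps) = lam j *: x eps.
    move=> j Hj; rewrite Hxa /ClOp (lin_sum _ _ _ (HTlin j Hj)) scaler_sumr.
    apply: eq_bigr => D _; rewrite (lin_scale (HTlin j Hj)).
    case: (boolP (D \subset V)) => HD; last by rewrite Hax ?scale0r ?scaler0.
    rewrite cDE (Vlist Hclin HTc HTc1 HTc2 (lam := lam j) Hj) ?scalerA ?(mulrC (ax D)) //; last exact: HTe'.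
    move=> x0; rewrite mem_enum => Hx0; have := subsetP HD _ Hx0.
    rewrite inE /is_valley => /and3P [_ Hnd Hv]; split => E.
      by rewrite /lam -E (negbTE Hnd).
    move: Hv; rewrite E /= /lam; case/andP: (Hj) => Hj1 _.
    have -> : (j.+1 == 1)%N = false by apply/negbTE; apply/eqP; lia.
    by move=> /= ->.

  exists f; split; first exact: Hf.
  split.
  + move=> k u v; rewrite {1}(Hcf u) {1}(Hcf v) -(ClOp_linA c k) Hf //.
    by rewrite ClOp_linA.
  + move=> j m Hj.
    have [y1 [y2 [H1 [H2 HQ]]]] := Qp_Cl Hclin Hanti Hsq HTlin HTc HTc1 HTc2 Hj (Cl_ClOp (cf m)).
    rewrite {1}(Hcf m) HQ HTe' // (lin_scale (supp_lin Hclin H1)).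
    rewrite (Hf (fun w => lam j *: y1 w + y2 w)); last exact: supp_comb.
    by rewrite /f HQ Tx // (lin_scale (supp_lin Hclin H1)).
  + move=> j m Hj; rewrite {1}(Hcf m).
    have -> : c j (ClOp c (cf m) eps) = (c j \o ClOp c (cf m)) eps by [].
    by rewrite Hf //; apply: (cl_comp Hclin Hanti Hsq (cl_c c Hj) (Cl_ClOp _)).
-
  move=> k x y f g _ _ Hf Hg z Hz /=.
  by rewrite Hf // Hg // (supp_lin Hclin Hz).
-
  move=> x y f g Hx Hy Hf Hg z Hz /=.
  rewrite /comp Hf // (Hg (z \o x)) //; apply: (cl_comp Hclin Hanti Hsq Hz (ClV_Cl _ Hx)).
-
  have Hgr : forall (P Q Rr : {set 'I_n} -> bool) x f,
      (forall D E F : {set 'I_n}, P D -> Q E -> odd #|F| = odd #|D| (+) odd #|E| -> Rr F) ->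
      in_Cl_supp c Q x -> is_fc n c eps x f -> forall m,
      (exists z, in_Cl_supp c P z /\ m = z eps) -> exists z, in_Cl_supp c Rr z /\ f m = z eps.
    move=> P Q Rr x f HR Hx Hf m [z [Hz ->]]; exists (z \o x); split.
      exact: (supp_comp Hclin Hanti Hsq HR Hz Hx).
    by rewrite Hf //; apply: supp_mono Hz.
  split => x f Hx Hf; split => m Hm; apply: (Hgr _ _ _ x f _ Hx Hf m Hm);
    move=> D E F /= HD /andP [_ HE] ->; move: HD HE; by case: odd; case: odd.
-
  split.
  + move=> x y f Hx Hy Hfx Hfy m.
    have [a [_ Ha]] := Hx; have [b [_ Hb]] := Hy.
    have Hab : a = b.
      apply: Hinj => /=; rewrite -Ha -Hb -(Hfc_ev _ _ Hfx) -(Hfc_ev _ _ Hfy) //.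
    by rewrite Ha Hb Hab.
  + move=> g [Hglin HgT Hgc].
    have HgcD : forall (D : {set 'I_n}) m, g (cD c D m) = cD c D (g m).
      move=> D m; rewrite !cDE; elim: (enum D) => [|x0 s IH] //=.
      by rewrite /comp Hgc ?ordB // IH.
    have Hgcl : forall (a : {ffun {set 'I_n} -> R[i]}) m, g (ClOp c a m) = ClOp c a (g m).
      move=> a m; rewrite /ClOp (lin_sum _ _ _ Hglin); apply: eq_bigr => D _.
      by rewrite (lin_scale Hglin) HgcD.
    pose b := cf (g eps).
    have Heig : forall k, (1 <= k <= n.-1)%N -> T k (ClOp c b eps) = lam k *: ClOp c b eps.
      by move=> k Hk; rewrite -(Hcf (g eps)) -HgT // HTe' // (lin_scale Hglin).
    exists (ClOp c b); split; last first.
      by move=> z [a [_ Hz]]; rewrite Hz Hgcl -(Hcf (g eps)).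
    exists b; split => // D HD.
    have [d Hd Hnd] : exists2 d, d \in D & d \notin V.
      by apply/subsetPn.
    move: Hnd; rewrite inE /is_valley ltn_ord /=.
    case: (boolP (d.+1 \in Des I)) => HdD /=.
    * have Hlt : (d.+1 < n)%N := @Des_lt n I d.+1 Hcomp HdD.
      have Hi : (1 <= d.+1 <= n.-1)%N by apply/andP; split => //; lia.
      move=> _.
      apply: (killm1 Hclin Hanti Hsq HTlin HTc HTc1 HTc2 (a := d) (a' := Ordinal Hlt)
                (eps := eps) (lam := lam d.+1) _ _ Hinj _ (Heig _ Hi) Hd) => //.
        exact: HTe'.
      by rewrite /lam HdD.
    * rewrite negb_or => /andP [Hd1 HdD'].
      have Hd0 : (0 < d)%N by move: Hd1; rewrite eqSS; case: (nat_of_ord d).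
      have Hdp : (d.-1 < n)%N by move: (ltn_ord d); lia.
      have Hi : (1 <= (Ordinal Hdp).+1 <= n.-1)%N by rewrite /= prednK //; move: (ltn_ord d) Hd0; lia.
      apply: (kill0 Hclin Hanti Hsq HTlin HTc HTc1 HTc2 (a := Ordinal Hdp) (a' := d)
                (eps := eps) (lam := lam (Ordinal Hdp).+1) _ _ Hinj _ (Heig _ Hi) Hd) => //=.
      + by rewrite prednK.
      + exact: HTe'.
      + by rewrite /lam prednK // (negbTE HdD').
Qed.
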